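(* If $\mathfrak{h}$ is a finite-dimensional complex Lie algebra, then $\mathcal{R}^i_1(\mathcal{C}^\bullet\mathfrak{h})$ is finite for all $i$. In particular, the cdga $\mathcal{C}^\bullet\mathfrak{h}$ has trivial resonance in degree $i$ (i.e. $0$ is an isolated point of $\mathcal{R}^i_1(\mathcal{C}^\bullet\mathfrak{h})$) whenever $H^i(\mathfrak{h})\neq 0$.
   Context: $\mathcal{C}^\bullet\mathfrak{h}=(\bigwedge^\bullet\mathfrak{h}^*,d)$ is the Chevalley–Eilenberg cochain cdga of $\mathfrak{h}$, with cohomology $H^\bullet(\mathfrak{h})$ (Lie algebra cohomology with trivial coefficients $\mathbb{C}$). For $\omega\in H^1(\mathfrak{h})=\mathrm{Hom}(\mathfrak{h}/[\mathfrak{h},\mathfrak{h}],\mathbb{C})$, ${}_\omega\mathbb{C}$ denotes the one-dimensional $\mathfrak{h}$-module on which $x$ acts by $\omega(x)$; then $\mathcal{R}^i_r(\mathcal{C}^\bullet\mathfrak{h})=\{\omega\in H^1(\mathfrak{h}):\dim H^i(\mathfrak{h},{}_\omega\mathbb{C})\ge r\}$ (equivalently, the set of closed $\omega\in\mathfrak{h}^*$ for which the complex $(\bigwedge^\bullet\mathfrak{h}^*, d+\omega\wedge\cdot)$ has $i$-th cohomology of dimension $\ge r$). *)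

(* Defs.v *)
From HB Require Import structures.
From mathcomp Require Import all_boot all_order all_algebra.
From mathcomp Require Import complex.
From mathcomp Require Import reals.
Set Implicit Arguments. Unset Strict Implicit. Unset Printing Implicit Defensive.
Import Order.TTheory GRing.Theory Num.Theory.
Local Open Scope ring_scope.

(* A finite-dimensional Lie algebra over a field F, realised on F^n = 'rV[F]_n
   (every finite-dimensional Lie algebra is isomorphic to one of these). *)
Record lie_alg (F : fieldType) (n : nat) := LieAlg {
  lbr : 'rV[F]_n -> 'rV[F]_n -> 'rV[F]_n;
  lbr_linl : forall y, linear (lbr ^~ y);
  lbr_linr : forall x, linear (lbr x);
  lbr_alt : forall x, lbr x x = 0;
  lbr_jacobi : forall x y z,
      lbr x (lbr y z) + lbr y (lbr z x) + lbr z (lbr x y) = 0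
}.

Section CE.
Variables (F : fieldType) (n : nat) (h : lie_alg F n).

Definition sconst (a b l : 'I_n) : F :=
  lbr h (delta_mx 0 a) (delta_mx 0 b) 0 l.

(* i-element subsets of {0..n-1}: they index the standard basis e^S of
   \bigwedge^i h^* (S = {s_1 < ... < s_i}, e^S = e^{s_1} /\ ... /\ e^{s_i}) *)
Definition ksub (i : nat) := {S : {set 'I_n} | #|S| == i}.

(* i-cochains: elements of \bigwedge^i h^*, in coordinates on the basis e^S,
   i.e. f S = value of the alternating form on (e_{s_1},...,e_{s_i}) *)
Definition cochain (i : nat) := {ffun ksub i -> F^o}.

Definition cev (i : nat) (f : cochain i) (S : {set 'I_n}) : F :=
  if insub S is Some T then f T else 0.

Definition sgn_below (S : {set 'I_n}) (a : 'I_n) : F :=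
  (-1) ^+ #|[set x in S | (x < a)%N]|.

(* value f(e_l, e_{t_1}, ..., e_{t_m}) for T = {t_1 < ... < t_m} *)
Definition cev_ins (i : nat) (f : cochain i) (l : 'I_n) (T : {set 'I_n}) : F :=
  if l \in T then 0 else sgn_below T l * cev f (l |: T).

(* Chevalley--Eilenberg differential with coefficients in  _w C, where
   w : 'rV_n gives the functional omega(x) = \sum_j x_j w_j :
   (df)(x_0..x_i) = \sum_j (-1)^j omega(x_j) f(..^x_j..)
                   + \sum_{j<k} (-1)^(j+k) f([x_j,x_k], ..^x_j..^x_k..)   *)
Definition ce_diff_fun (w : 'rV[F]_n) (i : nat) (f : cochain i) : cochain i.+1 :=
  [ffun S : ksub i.+1 =>
     \sum_(a in val S) sgn_below (val S) a * w 0 a * cev f (val S :\ a)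
   + \sum_(a in val S) \sum_(b in val S | (a < b)%N)
        sgn_below (val S) a * sgn_below (val S) b *
        \sum_l sconst a b l * cev_ins f l (val S :\ a :\ b)].

Definition ce_diff (w : 'rV[F]_n) (i : nat) : 'Hom(cochain i, cochain i.+1) :=
  linfun (@ce_diff_fun w i).

Definition cohom_dim (w : 'rV[F]_n) (i : nat) : nat :=
  (\dim (lker (ce_diff w i)) -
   match i with 0 => 0 | i'.+1 => \dim (limg (ce_diff w i')) end)%N.

Definition closed1 (w : 'rV[F]_n) : Prop :=
  forall x y : 'rV[F]_n, \sum_l lbr h x y 0 l * w 0 l = 0.

(* resonance variety R^i_r(C^. h) as a subset of H^1(h) = closed functionals *)
Definition resonance (i r : nat) (w : 'rV[F]_n) : Prop :=
  closed1 w /\ (r <= cohom_dim w i)%N.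

End CE.

Definition finite_set (T : eqType) (P : T -> Prop) : Prop :=
  exists s : seq T, forall x, P x -> x \in s.

Definition isolated_pt (R : rcfType) (n : nat) (P : 'rV[R[i]]_n -> Prop)
    (x : 'rV[R[i]]_n) : Prop :=
  P x /\ exists eps : R[i], 0 < eps /\
    forall y, P y -> (forall j, `|y 0 j - x 0 j| < eps) -> y = x.

(* Main.v *)
Require Import Defs.
From HB Require Import structures.
From mathcomp Require Import all_boot all_order all_algebra.
From mathcomp Require Import complex.
From mathcomp Require Import reals.
From mathcomp Require Import ring.
Import VectorInternalTheory.
Set Implicit Arguments. Unset Strict Implicit. Unset Printing Implicit Defensive.
Import Order.TTheory GRing.Theory Num.Theory.
Local Open Scope ring_scope.

Lemma cevD (F : fieldType) (n i : nat) (a : F) (f g : cochain F n i) S :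
  cev (a *: f + g) S = a * cev f S + cev g S.
Proof. by rewrite /cev; case: insubP => [T _ _|_]; rewrite ?ffunE ?mulr0 ?addr0. Qed.

Lemma cev_insD (F : fieldType) (n i : nat) (a : F) (f g : cochain F n i) l S :
  cev_ins (a *: f + g) l S = a * cev_ins f l S + cev_ins g l S.
Proof. rewrite /cev_ins; case: ifP => _; rewrite ?mulr0 ?addr0 // cevD; ring. Qed.

Lemma ce_diff_fun_lin (F : fieldType) (n : nat) (h : lie_alg F n) w i :
  linear (@ce_diff_fun F n h w i).
Proof.
move=> a f g; apply/ffunP => S; rewrite !ffunE.
rewrite [in RHS]/GRing.scale /=.
under eq_bigr => x _ do rewrite cevD mulrDr mulrCA.
rewrite big_split /= -mulr_sumr.
under [X in _ + X = _]eq_bigr => x _ do under eq_bigr => y _ do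
  (under eq_bigr => l _ do rewrite cev_insD mulrDr mulrCA;
   rewrite big_split /= -mulr_sumr mulrDr mulrCA).
under [X in _ + X = _]eq_bigr => x _ do rewrite big_split /= -mulr_sumr.
rewrite [X in _ + X = _]big_split /= -mulr_sumr.
ring.
Qed.

HB.instance Definition _ (F : fieldType) (n : nat) (h : lie_alg F n) w i :=
  GRing.isLinear.Build _ _ _ _
    (@ce_diff_fun F n h w i) (@ce_diff_fun_lin F n h w i).

Lemma ce_diffE (F : fieldType) (n : nat) (h : lie_alg F n) w i f :
  ce_diff h w i f = ce_diff_fun h w f.
Proof. by rewrite lfunE. Qed.

Lemma cev_out (F : fieldType) (n i : nat) (f : cochain F n i) (S : {set 'I_n}) :
  #|S| != i -> cev f S = 0.
Proof. by rewrite /cev; case: insubP => // T /= -> . Qed.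

Lemma sgnU1 (F : fieldType) n (T : {set 'I_n}) (j a : 'I_n) : j \notin T ->
  sgn_below F (j |: T) a = (if (j < a)%N then -1 else 1) * sgn_below F T a.
Proof.
move=> jT; rewrite /sgn_below.
case: ifP => ja.
  rewrite (_ : [set x in j |: T | (x < a)%N] = j |: [set x in T | (x < a)%N]).
    by rewrite cardsU1 inE (negbTE jT) /= add1n exprS.
  by apply/setP => x; rewrite !inE; case: eqP => // ->; rewrite ?ja ?andbF ?orbT.
rewrite mul1r (_ : [set x in j |: T | (x < a)%N] = [set x in T | (x < a)%N]) //.
by apply/setP => x; rewrite !inE; case: eqP => // ->; rewrite ?ja ?andbF.
Qed.

Lemma sgnD1 (F : fieldType) n (T : {set 'I_n}) (j a : 'I_n) : a \in T ->
  sgn_below F T j = (if (a < j)%N then -1 else 1) * sgn_below F (T :\ a) j.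
Proof.
move=> aT; rewrite -{1}(setD1K aT) sgnU1 //; by rewrite !inE eqxx.
Qed.

Lemma sgn_sq (F : fieldType) n (T : {set 'I_n}) a :
  sgn_below F T a * sgn_below F T a = 1.
Proof. by rewrite /sgn_below -exprD addnn -mul2n exprM sqrrN expr1n expr1n. Qed.

Lemma clifford (F : fieldType) n (w : 'rV[F]_n) (g : {set 'I_n} -> F) (j : 'I_n) (T : {set 'I_n}) :
  (if j \in T then 0 else sgn_below F T j *
     \sum_(a in j |: T) sgn_below F (j |: T) a * w 0 a * g ((j |: T) :\ a))
  + \sum_(a in T) sgn_below F T a * w 0 a *
      (if j \in T :\ a then 0 else sgn_below F (T :\ a) j * g (j |: (T :\ a)))
  = w 0 j * g T.
Proof.
case: ifP => jT.
  rewrite add0r (bigD1 j) //= setD11 big1 ?addr0.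
    have e : sgn_below F (T :\ j) j = sgn_below F T j.
      by rewrite (sgnD1 _ j jT) ltnn mul1r.
    rewrite e setD1K // -[RHS]mul1r -(sgn_sq F T j); ring.
  by move=> a /andP[_ aj]; rewrite !inE eq_sym aj jT mulr0.
rewrite (bigD1 j) ?setU11 //= setU1K ?jT // sgnU1 ?jT // ltnn mul1r.
rewrite mulrDr mulrA mulrA sgn_sq mul1r -addrA [X in _ + X](_ : _ = 0) ?addr0 //.
rewrite (eq_bigl (fun a => a \in T)); last first.
  by move=> a; rewrite !inE; case: eqP => [->|_]; rewrite ?jT ?andbT.
rewrite mulr_sumr -big_split /=.
apply: big1 => a aT; rewrite !inE jT andbF.
have aj : a != j by apply: contraFN jT => /eqP <-.
rewrite (sgnD1 _ j aT) sgnU1 ?jT //.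
rewrite (_ : (j |: T) :\ a = j |: (T :\ a)); last first.
  by apply/setP => x; rewrite !inE; case: eqP => // ->; rewrite (negbTE aj) /=; case: (a \in T).
case: ltngtP => [_|_|e]; try ring.
by move: aj; rewrite -val_eqE /= e eqxx.
Qed.

Definition iotaf (F : fieldType) n (j : 'I_n) i (f : cochain F n i.+1) : cochain F n i :=
  [ffun T : ksub n i => cev_ins f j (val T)].

Lemma iotaf_lin (F : fieldType) n (j : 'I_n) i : linear (@iotaf F n j i).
Proof. by move=> a f g; apply/ffunP => T; rewrite !ffunE cev_insD. Qed.

HB.instance Definition _ (F : fieldType) n (j : 'I_n) i :=
  GRing.isLinear.Build _ _ _ _ (@iotaf F n j i) (@iotaf_lin F n j i).

Definition iotaL (F : fieldType) n (j : 'I_n) i : 'Hom(cochain F n i.+1, cochain F n i) :=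
  linfun (@iotaf F n j i).

Definition epsf (F : fieldType) n (w : 'rV[F]_n) i (f : cochain F n i) : cochain F n i.+1 :=
  [ffun S : ksub n i.+1 =>
     \sum_(a in val S) sgn_below F (val S) a * w 0 a * cev f (val S :\ a)].

Lemma cev_val (F : fieldType) n i (f : cochain F n i) (T : ksub n i) : cev f (val T) = f T.
Proof. by rewrite /cev valK. Qed.

Lemma cev_iota (F : fieldType) n (j : 'I_n) i (f : cochain F n i.+1) (S : {set 'I_n}) :
  cev (iotaf j f) S = cev_ins f j S.
Proof.
rewrite /cev; case: insubP => [T _ <-|hS]; first by rewrite ffunE.
rewrite /cev_ins; case: ifP => // jS; rewrite cev_out ?mulr0 //.
by rewrite cardsU1 jS add1n eqSS.
Qed.

Lemma cev_eps (F : fieldType) n (w : 'rV[F]_n) i (f : cochain F n i) (S : {set 'I_n}) :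
  cev (epsf w f) S = \sum_(a in S) sgn_below F S a * w 0 a * cev f (S :\ a).
Proof.
rewrite /cev; case: insubP => [T _ <-|hS]; first by rewrite ffunE.
symmetry; apply: big1 => a aS; rewrite -/(cev f (S :\ a)) cev_out ?mulr0 //.
by move: hS; apply: contra => /eqP H; rewrite (cardsD1 a S) aS H.
Qed.

Lemma diff_split (F : fieldType) n (h : lie_alg F n) w i (f : cochain F n i) :
  ce_diff_fun h w f = ce_diff_fun h 0 f + epsf w f.
Proof.
apply/ffunP => S; rewrite !ffunE [in RHS]big1 ?add0r 1?[LHS]addrC //.
by move=> a _; rewrite mxE mulr0 mul0r.
Qed.

Definition Top (F : fieldType) n (h : lie_alg F n) (w : 'rV[F]_n) i (j : 'I_n) :
  'End(cochain F n i) :=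
  match i as i0 return 'End(cochain F n i0) with
  | 0 => (@iotaL F n j 0 \o ce_diff h w 0)%VF
  | k.+1 => ((ce_diff h w k \o @iotaL F n j k) + (@iotaL F n j k.+1 \o ce_diff h w k.+1))%VF
  end.

Lemma iotaLE (F : fieldType) n (j : 'I_n) i (f : cochain F n i.+1) : @iotaL F n j i f = iotaf j f.
Proof. by rewrite lfunE. Qed.

Lemma Top_shift (F : fieldType) n (h : lie_alg F n) (w : 'rV[F]_n) i (j : 'I_n) :
  Top h w i j = Top h 0 i j + w 0 j *: \1%VF.
Proof.
apply/lfunP => f; case: i f => [|k] f /=;
  rewrite !(add_lfunE, comp_lfunE, scale_lfunE, id_lfunE, ce_diffE, iotaLE).
- rewrite diff_split linearD /=; congr (_ + _).
  apply/ffunP => T; rewrite !ffunE.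
  have := clifford w (cev f) j (val T).
  rewrite [X in _ + X = _]big_pred0; last first.
    by move=> a; move: (valP T); rewrite cards_eq0 => /eqP ->; rewrite inE.
  rewrite addr0 cev_val => e.
  rewrite [RHS](_ : _ = w 0 j * f T); last by [].
  by rewrite -e /cev_ins (cev_eps w f).
- rewrite (diff_split h w (iotaf j f)) (diff_split h w f) linearD /= addrACA; congr (_ + _).
  apply/ffunP => T; rewrite !ffunE.
  rewrite [RHS](_ : _ = w 0 j * f T); last by [].
  rewrite -(cev_val f T) -(clifford w (cev f) j (val T)) addrC.
  congr (_ + _); first by rewrite /cev_ins (cev_eps w f).
  by apply: eq_bigr => a _; rewrite cev_iota.
Qed.

Lemma dim_bound (F : fieldType) (V W : vectType F) (d : 'Hom(V, W)) (B : {vspace V})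
  (T : 'End(V)) : lker T == 0%VS -> (forall z, z \in lker d -> T z \in B) ->
  (\dim (lker d) <= \dim B)%N.
Proof.
move=> /eqP T0 hB; rewrite -(@limg_dim_eq _ _ _ T (lker d)); last by rewrite T0 capv0.
apply: dimvS; apply/subvP => _ /memv_imgP[z zk ->]; exact: hB.
Qed.

Lemma cohom0 (F : fieldType) n (h : lie_alg F n) (w : 'rV[F]_n) i (j : 'I_n) :
  lker (Top h w i j) == 0%VS -> cohom_dim h w i = 0%N.
Proof.
case: i => [|k] /= T0; rewrite /cohom_dim.
  rewrite subn0; apply/eqP; rewrite -leqn0.
  rewrite (leq_trans (dim_bound (B := 0%VS) T0 _)) ?dimv0 // => z.
  rewrite memv_ker => /eqP zk.
  by rewrite comp_lfunE zk linear0 mem0v.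
apply/eqP; rewrite subn_eq0; apply: (dim_bound T0) => z; rewrite memv_ker => /eqP zk.
by rewrite add_lfunE !comp_lfunE zk linear0 addr0 memv_img ?memvf.
Qed.

Lemma lfun_mx (F : fieldType) (V : vectType F) (T : 'End(V)) v :
  v2r (T v) = v2r v *m f2mx T.
Proof. by rewrite unlock /= r2vK. Qed.

Lemma eig_root (F : fieldType) (V : vectType F) (T : 'End(V)) c :
  lker (T + c *: \1%VF) != 0%VS -> root (char_poly (f2mx T)) (- c).
Proof.
move=> nz; rewrite -eigenvalue_root_char; apply/eigenvalueP.
set v := vpick (lker (T + c *: \1%VF)).
have vk : v \in lker (T + c *: \1%VF) by exact: memv_pick.
have v0 : v != 0 by rewrite vpick0.
exists (v2r v).
  move: vk; rewrite memv_ker add_lfunE scale_lfunE id_lfunE addr_eq0 => /eqP e.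
  by rewrite -lfun_mx e linearN linearZ /= scaleNr.
by apply: contra v0 => /eqP e; rewrite -(v2rK v) e linear0.
Qed.

Definition rts (F : closedFieldType) (V : vectType F) (T : 'End(V)) : seq F :=
  sval (closed_field_poly_normal (char_poly (f2mx T))).

Lemma rts_root (F : closedFieldType) (V : vectType F) (T : 'End(V)) x :
  root (char_poly (f2mx T)) x -> x \in rts T.
Proof.
rewrite /rts; case: closed_field_poly_normal => rs /= e.
by rewrite {1}e (monicP (char_poly_monic _)) scale1r root_prod_XsubC.
Qed.

Definition Lres (F : closedFieldType) n (h : lie_alg F n) i : seq F :=
  flatten [seq map -%R (rts (Top h 0 i j)) | j <- enum 'I_n].

Lemma res_in (F : closedFieldType) n (h : lie_alg F n) i w :
  resonance h i 1 w -> forall j, w 0 j \in Lres h i.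
Proof.
case=> _ r1 j.
have : lker (Top h w i j) != 0%VS.
  by apply/negP => /cohom0 H; rewrite H in r1.
rewrite Top_shift => /eig_root /rts_root hr.
apply/flatten_mapP; exists j; first by rewrite mem_enum.
by rewrite -[w 0 j]opprK; apply: map_f.
Qed.

Lemma eps_ex (K : numFieldType) (s : seq K) :
  exists e : K, 0 < e /\ forall x, x \in s -> x != 0 -> e <= `|x|.
Proof.
elim: s => [|x s [e [e0 he]]]; first by exists 1.
have [->|x0] := eqVneq x 0.
  exists e; split => // y; rewrite in_cons => /orP[/eqP ->|ys]; last exact: he.
  by rewrite eqxx.
have nx : 0 < `|x| by rewrite normr_gt0.
have ex0 : 0 < e + `|x| by rewrite addr_gt0.
exists (e * `|x| / (e + `|x|)); split; first by rewrite divr_gt0 // mulr_gt0.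
move=> y; rewrite in_cons => /orP[/eqP ->|ys] y0.
  by rewrite ler_pdivrMr // mulrDr mulrC lerDl mulr_ge0.
apply: le_trans (he _ ys y0).
by rewrite ler_pdivrMr // mulrDr lerDr mulr_ge0 // ltW.
Qed.

Theorem proposition4p1 (R : realType) (n : nat) (h : lie_alg R[i] n) (i : nat) :
  finite_set (resonance h i 1)
  /\ (cohom_dim h 0 i != 0%N -> isolated_pt (resonance h i 1) 0).
Proof.
set L := Lres h i.
split.
  exists [seq \row_(j < n) L`_(t j : nat) | t : {ffun 'I_n -> 'I_(size L)} <- enum {ffun 'I_n -> 'I_(size L)}].
  move=> w hw; have hL := res_in hw.
  have hidx : forall j : 'I_n, (index (w 0%R j) L < size L)%N by move=> j; rewrite index_mem.
  apply/mapP; exists [ffun j => Ordinal (hidx j)]; first by rewrite mem_enum.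
  by apply/rowP => j; rewrite mxE ffunE /= nth_index.
move=> H; split.
  split; last by rewrite lt0n.
  by move=> x y; apply: big1 => l _; rewrite mxE mulr0.
have [e [e0 he]] := eps_ex L.
exists e; split => // y hy hyn.
apply/rowP => j; rewrite mxE.
have [//|y0] := eqVneq (y 0 j) 0.
have := hyn j; rewrite mxE subr0 => lt.
have := lt_le_trans lt (he _ (res_in hy j) y0).
by rewrite ltxx.
Qed.
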